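(* Let $\mathcal{D}$ be a vector lattice of bounded real functions on a nonempty set $X$ with the Stone property, and let $(\mathcal{E},\mathcal{D})$ be a bilinear form on which the unit contraction operates. Then $K(f):=\inf\{\mathcal{E}(f,\varphi):\varphi\in E_f\}$, $f\in\mathcal{D}_0^+$, defines a functional on the cone $\mathcal{D}_0^+$ which is additive, positively homogeneous and takes values in $[0,\infty)$.
   Context: Stone property: $f\in\mathcal{D}\Rightarrow f\wedge1\in\mathcal{D}$. Unit contraction $T_1(x)=\max(x,0)\wedge1$; it operates on $(\mathcal{E},\mathcal{D})$ if $\mathcal{E}(T_1(f))\le\mathcal{E}(f)$ for all $f\in\mathcal{D}$. A bilinear form is a symmetric nonnegative definite bilinear map, $\mathcal{E}(f)=\mathcal{E}(f,f)$. For $f\in\mathcal{D}^+$ (nonnegative elements), $E_f:=\{\varphi\in\mathcal{D}:\mathbf 1_{\{f>0\}}\le\varphi\le\mathbf 1\}$; $\mathcal{D}_0^+:=\{f\in\mathcal{D}^+:E_f\ne\emptyset\}$ and $\mathcal{D}_0$ the linear span of $\mathcal{D}_0^+$. *)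

(* Defs.v *)
From Stdlib Require Import Reals Lra.
Open Scope R_scope.

Section Defs.
Variable X : Type.

Definition fadd (f g : X -> R) : X -> R := fun x => f x + g x.
Definition fscal (a : R) (f : X -> R) : X -> R := fun x => a * f x.
Definition fzero : X -> R := fun _ => 0.
Definition fmax (f g : X -> R) : X -> R := fun x => Rmax (f x) (g x).
Definition fmin (f g : X -> R) : X -> R := fun x => Rmin (f x) (g x).
Definition fmin1 (f : X -> R) : X -> R := fun x => Rmin (f x) 1.

Definition bounded (f : X -> R) : Prop := exists M, forall x, Rabs (f x) <= M.

Definition vector_lattice_of_bounded (D : (X -> R) -> Prop) : Prop :=
  D fzero /\
  (forall f g, D f -> D g -> D (fadd f g)) /\
  (forall a f, D f -> D (fscal a f)) /\
  (forall f g, D f -> D g -> D (fmax f g)) /\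
  (forall f g, D f -> D g -> D (fmin f g)) /\
  (forall f, D f -> bounded f).

Definition stone (D : (X -> R) -> Prop) : Prop :=
  forall f, D f -> D (fmin1 f).

Definition bilinear_form (D : (X -> R) -> Prop) (E : (X -> R) -> (X -> R) -> R) : Prop :=
  (forall f g, D f -> D g -> E f g = E g f) /\
  (forall f g h, D f -> D g -> D h -> E (fadd f g) h = E f h + E g h) /\
  (forall a f g, D f -> D g -> E (fscal a f) g = a * E f g) /\
  (forall f, D f -> 0 <= E f f).

Definition T1 (f : X -> R) : X -> R := fun x => Rmin (Rmax (f x) 0) 1.

Definition unit_contraction_operates (D : (X -> R) -> Prop)
  (E : (X -> R) -> (X -> R) -> R) : Prop :=
  forall f, D f -> E (T1 f) (T1 f) <= E f f.

Definition Dplus (D : (X -> R) -> Prop) (f : X -> R) : Prop :=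
  D f /\ forall x, 0 <= f x.

Definition Ef (D : (X -> R) -> Prop) (f phi : X -> R) : Prop :=
  D phi /\ forall x, (if Rlt_dec 0 (f x) then 1 else 0) <= phi x /\ phi x <= 1.

Definition D0plus (D : (X -> R) -> Prop) (f : X -> R) : Prop :=
  Dplus D f /\ exists phi, Ef D f phi.

Definition is_inf (S : R -> Prop) (m : R) : Prop :=
  (forall y, S y -> m <= y) /\ (forall m', (forall y, S y -> m' <= y) -> m' <= m).

Definition Kset (D : (X -> R) -> Prop) (E : (X -> R) -> (X -> R) -> R) (f : X -> R) : R -> Prop :=
  fun y => exists phi, Ef D f phi /\ y = E f phi.

End Defs.
Arguments fadd {X}. Arguments fscal {X}. Arguments fzero {X}. Arguments fmax {X}. Arguments fmin {X}. Arguments fmin1 {X}. Arguments bounded {X}. Arguments vector_lattice_of_bounded {X}. Arguments stone {X}. Arguments bilinear_form {X}. Arguments T1 {X}. Arguments unit_contraction_operates {X}. Arguments Dplus {X}. Arguments Ef {X}. Arguments D0plus {X}. Arguments Kset {X}.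

(* Main.v *)
Require Import Defs.
From Stdlib Require Import Reals Lra FunctionalExtensionality.
Open Scope R_scope.

Lemma quad (a b : R) : 0 <= b -> (forall t, 0 < t -> 0 <= 2*t*a + t*t*b) -> 0 <= a.
Proof.
  intros hb H. destruct (Rle_or_lt 0 a) as [h|h]; auto.
  set (t := - a / (b + 1)).
  assert (ht : 0 < t) by (unfold t; apply Rdiv_lt_0_compat; lra).
  specialize (H t ht).
  assert (e : t * (b+1) = - a) by (unfold t; field; lra).
  assert (2*t*a + t*t*b <= t * a).
  { assert (t*t*b <= t*t*(b+1)) by nra. nra. }
  nra.
Qed.

Section S.
Variable X : Type.
Variable D : (X -> R) -> Prop.
Variable E : (X -> R) -> (X -> R) -> R.
Hypothesis hD : vector_lattice_of_bounded D.
Hypothesis hE : bilinear_form D E.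
Hypothesis hT : unit_contraction_operates D E.

Lemma Dadd f g : D f -> D g -> D (fadd f g). Proof. destruct hD as (_&h&_); auto. Qed.
Lemma Dscal a f : D f -> D (fscal a f). Proof. destruct hD as (_&_&h&_); auto. Qed.
Lemma Dmax f g : D f -> D g -> D (fmax f g). Proof. destruct hD as (_&_&_&h&_); auto. Qed.
Lemma Esym f g : D f -> D g -> E f g = E g f. Proof. destruct hE as (h&_); auto. Qed.
Lemma Eadd f g h : D f -> D g -> D h -> E (fadd f g) h = E f h + E g h.
Proof. destruct hE as (_&h'&_); auto. Qed.
Lemma Escal a f g : D f -> D g -> E (fscal a f) g = a * E f g.
Proof. destruct hE as (_&_&h&_); auto. Qed.
Lemma Epos f : D f -> 0 <= E f f. Proof. destruct hE as (_&_&_&h); auto. Qed.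

Lemma Eexp u v t : D u -> D v ->
  E (fadd u (fscal t v)) (fadd u (fscal t v)) = E u u + 2*t*E u v + t*t*E v v.
Proof.
  intros Hu Hv. assert (Hw : D (fadd u (fscal t v))) by (apply Dadd; auto; apply Dscal; auto).
  rewrite Eadd, Escal; auto; try apply Dscal; auto.
  rewrite (Esym u), (Esym v); auto.
  rewrite Eadd, Escal; auto; try apply Dscal; auto.
  rewrite Eadd, Escal; auto; try apply Dscal; auto.
  rewrite (Esym v u); auto. ring.
Qed.

Lemma phi_nonneg f phi : Ef D f phi -> forall x, 0 <= phi x.
Proof.
  intros [_ H] x. destruct (H x) as [h _]. destruct (Rlt_dec 0 (f x)); lra.
Qed.

Lemma nonneg_Efphi f phi : Dplus D f -> Ef D f phi -> 0 <= E f phi.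
Proof.
  intros [Hf Hf0] Hp. pose proof (phi_nonneg _ _ Hp) as Hp0. destruct Hp as [Hp Hpx].
  rewrite Esym; auto.
  apply (quad _ (E f f)); [apply Epos; auto|]. intros t ht.
  assert (HT : T1 (fadd phi (fscal t f)) = phi).
  { apply functional_extensionality; intro x. unfold T1, fadd, fscal.
    specialize (Hf0 x). specialize (Hp0 x). destruct (Hpx x) as [h1 h2].
    destruct (Rlt_dec 0 (f x)) as [r|r].
    - assert (0 <= t * f x) by nra.
      unfold Rmax, Rmin; repeat destruct Rle_dec; lra.
    - assert (f x = 0) by lra. rewrite H. rewrite Rmult_0_r, Rplus_0_r.
      unfold Rmax, Rmin; repeat destruct Rle_dec; lra. }
  pose proof (hT (fadd phi (fscal t f)) ltac:(apply Dadd; auto; apply Dscal; auto)) as H.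
  rewrite HT, Eexp in H; auto.
  lra.
Qed.

Lemma disj_nonpos f d : Dplus D f -> D d -> (forall x, 0 <= d x <= 1) ->
  (forall x, 0 < f x -> d x = 0) -> E f d <= 0.
Proof.
  intros [Hf Hf0] Hd Hd01 Hdz.
  rewrite Esym; auto.
  cut (0 <= - E d f). lra.
  apply (quad _ (E f f)); [apply Epos; auto|]. intros t ht.
  assert (HT : T1 (fadd d (fscal (-t) f)) = d).
  { apply functional_extensionality; intro x. unfold T1, fadd, fscal.
    specialize (Hf0 x). destruct (Hd01 x) as [h1 h2].
    destruct (Rlt_dec 0 (f x)) as [r|r].
    - rewrite (Hdz x r). assert (0 <= t * f x) by nra.
      unfold Rmax, Rmin; repeat destruct Rle_dec; lra.
    - assert (f x = 0) by lra. rewrite H. rewrite Rmult_0_r, Rplus_0_r.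
      unfold Rmax, Rmin; repeat destruct Rle_dec; lra. }
  pose proof (hT (fadd d (fscal (-t) f)) ltac:(apply Dadd; auto; apply Dscal; auto)) as H.
  rewrite HT, Eexp in H; auto.
  nra.
Qed.

Lemma mono f phi chi : Dplus D f -> Ef D f phi -> D chi ->
  (forall x, phi x <= chi x <= 1) -> E f chi <= E f phi.
Proof.
  intros Hf Hp Hc Hpc. pose proof (phi_nonneg _ _ Hp) as Hp0.
  destruct Hp as [Hp Hpx]. destruct Hf as [Hf Hf0].
  assert (Hdd : D (fadd chi (fscal (-1) phi))) by (apply Dadd; auto; apply Dscal; auto).
  pose proof (disj_nonpos f (fadd chi (fscal (-1) phi)) (conj Hf Hf0) Hdd) as H.
  rewrite (Esym f), Eadd, Escal, (Esym phi), (Esym chi) in H; auto; try apply Dscal; auto.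
  cut (E f chi + -1 * E f phi <= 0). lra.
  apply H.
  - intro x. unfold fadd, fscal. specialize (Hpc x). specialize (Hp0 x). lra.
  - intros x r. unfold fadd, fscal. destruct (Hpx x) as [h1 h2]. specialize (Hpc x).
    destruct (Rlt_dec 0 (f x)); [|lra]. lra.
Qed.

Lemma Ef_mono f g phi : (forall x, 0 < f x -> 0 < g x) -> Ef D g phi -> Ef D f phi.
Proof.
  intros Hfg [Hp Hpx]. split; auto. intro x. destruct (Hpx x) as [h1 h2]. split; auto.
  destruct (Rlt_dec 0 (f x)) as [r|r]; destruct (Rlt_dec 0 (g x)) as [r'|r']; try lra.
  exfalso; apply r'; auto.
Qed.

Lemma D0_add f g : D0plus D f -> D0plus D g -> D0plus D (fadd f g).
Proof.
  intros [[Hf Hf0] [p Hp]] [[Hg Hg0] [q Hq]].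
  pose proof (phi_nonneg _ _ Hp) as Hp0. pose proof (phi_nonneg _ _ Hq) as Hq0.
  destruct Hp as [Hp Hpx]. destruct Hq as [Hq Hqx].
  split; [split|].
  - apply Dadd; auto.
  - intro x; unfold fadd; specialize (Hf0 x); specialize (Hg0 x); lra.
  - exists (fmax p q). split; [apply Dmax; auto|]. intro x. unfold fmax, fadd.
    specialize (Hf0 x); specialize (Hg0 x); specialize (Hp0 x); specialize (Hq0 x).
    destruct (Hpx x) as [a1 a2]. destruct (Hqx x) as [b1 b2].
    destruct (Rlt_dec 0 (f x)); destruct (Rlt_dec 0 (g x)); destruct (Rlt_dec 0 (f x + g x));
    unfold Rmax; destruct Rle_dec; lra.
Qed.

Lemma D0_scal c f : 0 <= c -> D0plus D f -> D0plus D (fscal c f).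
Proof.
  intros hc [[Hf Hf0] [p Hp]]. split; [split|].
  - apply Dscal; auto.
  - intro x; unfold fscal; specialize (Hf0 x); nra.
  - exists p. apply (Ef_mono _ f); auto. intros x h. unfold fscal in h.
    specialize (Hf0 x). destruct (Rle_lt_or_eq_dec _ _ Hf0) as [r|r]; auto.
    rewrite <- r in h; lra.
Qed.

Lemma inf_exists f : D0plus D f -> exists m, is_inf (Kset D E f) m.
Proof.
  intros Hf. destruct Hf as [Hfp [p Hp]].
  destruct (completeness (fun y => Kset D E f (- y))) as [m [Hm1 Hm2]].
  - exists 0. intros y [q [Hq e]]. pose proof (nonneg_Efphi _ _ Hfp Hq). lra.
  - exists (- E f p). exists p. split; auto. ring.
  - exists (- m). split.
    + intros y Hy. assert (Kset D E f (- - y)) by (rewrite Ropp_involutive; auto).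
      pose proof (Hm1 _ H). lra.
    + intros m' Hm'. assert (m <= - m'). { apply Hm2. intros y Hy. pose proof (Hm' _ Hy). lra. }
      lra.
Qed.

End S.

Theorem lemmaL (X : Type) (x0 : X) (D : (X -> R) -> Prop)
  (E : (X -> R) -> (X -> R) -> R)
  (hD : vector_lattice_of_bounded D) (hS : stone D)
  (hE : bilinear_form D E) (hT : unit_contraction_operates D E) :
  (* D_0^+ is a cone *)
  (forall f g, D0plus D f -> D0plus D g -> D0plus D (fadd f g)) /\
  (forall c f, 0 <= c -> D0plus D f -> D0plus D (fscal c f)) /\
  (* K(f) = inf { E(f,phi) : phi in E_f } exists as a real number for f in D_0^+ *)
  (forall f, D0plus D f -> exists m, is_inf (Kset D E f) m) /\
  (* any K given by this infimum is [0,oo)-valued, additive, positively homogeneous *)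
  (forall K : (X -> R) -> R,
     (forall f, D0plus D f -> is_inf (Kset D E f) (K f)) ->
     (forall f, D0plus D f -> 0 <= K f) /\
     (forall f g, D0plus D f -> D0plus D g -> K (fadd f g) = K f + K g) /\
     (forall c f, 0 <= c -> D0plus D f -> K (fscal c f) = c * K f)).
Proof.
  split; [exact (D0_add X D hD)|].
  split; [exact (D0_scal X D hD)|].
  split; [exact (inf_exists X D E hD hE hT)|].
  intros K HK.
  assert (Kpos : forall f, D0plus D f -> 0 <= K f).
  { intros f Hf. destruct (HK f Hf) as [_ H]. apply H.
    intros y [p [Hp e]]. subst y. apply (nonneg_Efphi X D E hD hE hT); auto. apply Hf. }
  split; [exact Kpos|]. split.
  - intros f g Hf Hg. pose proof (D0_add X D hD f g Hf Hg) as Hfg.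
    destruct (HK _ Hf) as [Lf Gf]. destruct (HK _ Hg) as [Lg Gg].
    destruct (HK _ Hfg) as [Lfg Gfg].
    destruct Hf as [[Df Df0] _]. destruct Hg as [[Dg Dg0] _].
    apply Rle_antisym.
    +
      assert (H1 : forall p q, Ef D f p -> Ef D g q -> K (fadd f g) <= E f p + E g q).
      { intros p q Hp Hq.
        pose proof (phi_nonneg X D _ _ Hp) as Hp0. pose proof (phi_nonneg X D _ _ Hq) as Hq0.
        destruct Hp as [Dp Hpx]. destruct Hq as [Dq Hqx].
        assert (Dm : D (fmax p q)) by (apply (Dmax X D hD); auto).
        assert (Hm : Ef D (fadd f g) (fmax p q)).
        { split; auto. intro x. unfold fmax, fadd.
          specialize (Df0 x); specialize (Dg0 x); specialize (Hp0 x); specialize (Hq0 x).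
          destruct (Hpx x) as [a1 a2]. destruct (Hqx x) as [b1 b2].
          destruct (Rlt_dec 0 (f x)); destruct (Rlt_dec 0 (g x)); destruct (Rlt_dec 0 (f x + g x));
          unfold Rmax; destruct Rle_dec; lra. }
        apply Rle_trans with (E (fadd f g) (fmax p q)).
        { apply Lfg. exists (fmax p q); auto. }
        rewrite (Eadd X D E hE); auto.
        pose proof (mono X D E hD hE hT f p (fmax p q) (conj Df Df0) (conj Dp Hpx) Dm) as M1.
        pose proof (mono X D E hD hE hT g q (fmax p q) (conj Dg Dg0) (conj Dq Hqx) Dm) as M2.
        assert (E f (fmax p q) <= E f p).
        { apply M1. intro x. unfold fmax, Rmax. destruct (Hpx x), (Hqx x). destruct Rle_dec; lra. }
        assert (E g (fmax p q) <= E g q).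
        { apply M2. intro x. unfold fmax, Rmax. destruct (Hpx x), (Hqx x). destruct Rle_dec; lra. }
        lra. }
      assert (H2 : forall q, Ef D g q -> K (fadd f g) - E g q <= K f).
      { intros q Hq. apply Gf. intros y [p [Hp e]]. subst y. pose proof (H1 p q Hp Hq). lra. }
      assert (K (fadd f g) - K f <= K g).
      { apply Gg. intros y [q [Hq e]]. subst y. pose proof (H2 q Hq). lra. }
      lra.
    + apply Gfg. intros y [p [Hp e]]. subst y.
      assert (Hpf : Ef D f p).
      { apply (Ef_mono X D f (fadd f g)); auto. intros x h. unfold fadd. specialize (Dg0 x); lra. }
      assert (Hpg : Ef D g p).
      { apply (Ef_mono X D g (fadd f g)); auto. intros x h. unfold fadd. specialize (Df0 x); lra. }
      rewrite (Eadd X D E hE); auto; [|apply Hp].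
      assert (K f <= E f p) by (apply Lf; exists p; auto).
      assert (K g <= E g p) by (apply Lg; exists p; auto).
      lra.
  - intros c f hc Hf. pose proof (D0_scal X D hD c f hc Hf) as Hcf.
    destruct (HK _ Hf) as [Lf Gf]. destruct (HK _ Hcf) as [Lc Gc].
    destruct Hf as [[Df Df0] [p0 Hp0]].
    assert (Hsub : forall p, Ef D f p -> Ef D (fscal c f) p).
    { intros p. apply (Ef_mono X D _ f). intros x h. unfold fscal in h.
      specialize (Df0 x). destruct (Rle_lt_or_eq_dec _ _ Df0) as [r|r]; auto.
      rewrite <- r in h; lra. }
    destruct (Rle_lt_or_eq_dec _ _ hc) as [hc'|hc'].
    + assert (Hsup : forall p, Ef D (fscal c f) p -> Ef D f p).
      { intros p. apply (Ef_mono X D _ (fscal c f)). intros x h. unfold fscal. nra. }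
      apply Rle_antisym.
      * assert (K (fscal c f) / c <= K f).
        { apply Gf. intros y [p [Hp e]]. subst y.
          assert (K (fscal c f) <= E (fscal c f) p) by (apply Lc; exists p; auto).
          rewrite (Escal X D E hE) in H; auto; [|apply Hp].
          apply (Rmult_le_reg_r c); auto. unfold Rdiv. rewrite Rmult_assoc, Rinv_l; lra. }
        apply (Rmult_le_reg_r (/ c)). apply Rinv_0_lt_compat; auto.
        replace (c * K f * / c) with (K f) by (field; lra). exact H.
      * apply Gc. intros y [p [Hp e]]. subst y.
        rewrite (Escal X D E hE); auto; [|apply Hp].
        assert (K f <= E f p) by (apply Lf; exists p; auto). nra.
    + subst c. rewrite Rmult_0_l.
      assert (Z : forall p, Ef D (fscal 0 f) p -> E (fscal 0 f) p = 0).
      { intros p Hp. rewrite (Escal X D E hE); auto; [ring|apply Hp]. }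
      apply Rle_antisym.
      * pose proof (Z p0 (Hsub p0 Hp0)) as Z0.
        assert (K (fscal 0 f) <= E (fscal 0 f) p0) by (apply Lc; exists p0; split; auto).
        lra.
      * apply Gc. intros y [p [Hp e]]. subst y. rewrite Z; auto; lra.
Qed.
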